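(* Let $x$ be a grid function with $x_s\neq 0$ at every node that satisfies the scheme (S) with $\check B\equiv 0$. Then at every node the discrete energy conservation law $$\frac12\Big(x_t^2+x_s^{-1}+\hat x_s^{-1}+\alpha^2x_s\hat x_s\Big)_{\check t}+\frac12\Big((x_t^++\check x_t^+)\big((\hat x_s\check x_s)^{-1}-\alpha^2x_s\big)\Big)_{\bar s}=0$$ holds. Equivalently, the left-hand side equals $\frac{x_t+\check x_t}{2}$ times the left-hand side of (S), for any grid function $x$ with $x_s\ne0$.
   Context: Fix mesh steps $\tau>0$, $h>0$ and a constant $\alpha\in\mathbb R$. A grid function is a real-valued function $f=f(t,s)$ on the uniform orthogonal mesh $\{(n\tau,kh): n,k\in\mathbb Z\}$; at the node $(n\tau,kh)$ the symbol $t$ denotes the number $n\tau$. Shifts: $\hat f=f(t+\tau,s)$, $\check f=f(t-\tau,s)$, $f^+=f_+=f(t,s+h)$, $f^-=f_-=f(t,s-h)$; a shift applied to a composite expression shifts the whole expression (e.g. $\hat x_s$ is $x_s$ evaluated at $(t+\tau,s)$, $\check x_t$ is $x_t$ evaluated at $(t-\tau,s)$, $x_t^+$ is $x_t$ evaluated at $(t,s+h)$, $\check x_t^+$ is $x_t$ evaluated at $(t-\tau,s+h)$). Differences: $f_t=(\hat f-f)/\tau$, $f_{\check t}=(f-\check f)/\tau$, $f_s=(f_+-f)/h$, $f_{\bar s}=(f-f_-)/h$; iterated differences compose, e.g. $x_{t\check t}=(x_t)_{\check t}=(\hat x-2x+\check x)/\tau^2$ and $x_{s\bar s}=(x_s)_{\bar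 s}=(x_+-2x+x_-)/h^2$. Given a grid function $x$ with $x_s\neq0$ everywhere and a grid function $\check B$ (an approximation of the bottom-slope term), the scheme (S) is the requirement that at every node $$x_{t\check t}-\alpha^2x_{s\bar s}+\Big(\frac{1}{\hat x_s\check x_s}\Big)_{\bar s}-\check B=0 .$$ *)

(* Defs.v *)
From Stdlib Require Import Reals ZArith.
Open Scope R_scope.

(* A grid function on the mesh {(n tau, k h) : n,k in Z}, indexed by (n,k). *)
Definition grid := Z -> Z -> R.

Definition hat (f : grid) : grid := fun n k => f (n + 1)%Z k.
Definition chk (f : grid) : grid := fun n k => f (n - 1)%Z k.
Definition splus (f : grid) : grid := fun n k => f n (k + 1)%Z.
Definition sminus (f : grid) : grid := fun n k => f n (k - 1)%Z.

Definition dt (tau : R) (f : grid) : grid := fun n k => (hat f n k - f n k) / tau.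
Definition dtb (tau : R) (f : grid) : grid := fun n k => (f n k - chk f n k) / tau.
Definition ds (h : R) (f : grid) : grid := fun n k => (splus f n k - f n k) / h.
Definition dsb (h : R) (f : grid) : grid := fun n k => (f n k - sminus f n k) / h.

Definition scheme_lhs (tau h alpha : R) (x B_chk : grid) : grid :=
  fun n k =>
    dtb tau (dt tau x) n k
    - alpha ^ 2 * dsb h (ds h x) n k
    + dsb h (fun n' k' => / (hat (ds h x) n' k' * chk (ds h x) n' k')) n k
    - B_chk n k.

Definition energy (tau h alpha : R) (x : grid) : grid :=
  fun n k =>
    / 2 * (dt tau x n k ^ 2 + / ds h x n k + / hat (ds h x) n k
           + alpha ^ 2 * ds h x n k * hat (ds h x) n k).

Definition flux (tau h alpha : R) (x : grid) : grid :=
  fun n k =>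
    / 2 * (splus (dt tau x) n k + splus (chk (dt tau x)) n k)
        * (/ (hat (ds h x) n k * chk (ds h x) n k) - alpha ^ 2 * ds h x n k).

Definition conservation_lhs (tau h alpha : R) (x : grid) : grid :=
  fun n k => dtb tau (energy tau h alpha x) n k + dsb h (flux tau h alpha x) n k.

(* Main.v *)
Require Import Defs.
From Stdlib Require Import Reals ZArith Lra Lia.
Open Scope R_scope.

Lemma ident (tau h alpha : R) (Htau : 0 < tau) (Hh : 0 < h) (x : grid) :
  (forall n k, ds h x n k <> 0) ->
  forall n k, conservation_lhs tau h alpha x n k =
    (dt tau x n k + chk (dt tau x) n k) / 2
    * scheme_lhs tau h alpha x (fun _ _ => 0) n k.
Proof.
  intros Hd n k.
  pose proof (Hd n k) as H1. pose proof (Hd (n+1)%Z k) as H2.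
  pose proof (Hd (n-1)%Z k) as H3. pose proof (Hd n (k-1)%Z) as H4.
  pose proof (Hd (n+1)%Z (k-1)%Z) as H5. pose proof (Hd (n-1)%Z (k-1)%Z) as H6.
  unfold conservation_lhs, scheme_lhs, energy, flux, dtb, dsb, dt, ds, hat, chk,
    splus, sminus in *.
  replace (n - 1 + 1)%Z with n in * by lia.
  replace (k - 1 + 1)%Z with k in * by lia.
  set (a := x n k) in *. set (b := x (n+1)%Z k) in *. set (c := x (n-1)%Z k) in *.
  set (d := x n (k+1)%Z) in *. set (e := x (n+1)%Z (k+1)%Z) in *.
  set (f := x (n-1)%Z (k+1)%Z) in *. set (g := x n (k-1)%Z) in *.
  set (i := x (n+1)%Z (k-1)%Z) in *. set (j := x (n-1)%Z (k-1)%Z) in *.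
  assert (d - a <> 0) by (intro Q; apply H1; rewrite Q; field; lra).
  assert (e - b <> 0) by (intro Q; apply H2; rewrite Q; field; lra).
  assert (f - c <> 0) by (intro Q; apply H3; rewrite Q; field; lra).
  assert (a - g <> 0) by (intro Q; apply H4; rewrite Q; field; lra).
  assert (b - i <> 0) by (intro Q; apply H5; rewrite Q; field; lra).
  assert (c - j <> 0) by (intro Q; apply H6; rewrite Q; field; lra).
  field. repeat split; lra.
Qed.

Theorem mainTheorem3 (tau h alpha : R) (Htau : 0 < tau) (Hh : 0 < h) :
  (* discrete energy conservation for solutions of (S) with check B = 0 *)
  (forall x : grid,
     (forall n k, ds h x n k <> 0) ->
     (forall n k, scheme_lhs tau h alpha x (fun _ _ => 0) n k = 0) ->
     forall n k, conservation_lhs tau h alpha x n k = 0) /\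
  (* the underlying identity, for any x with x_s <> 0 *)
  (forall x : grid,
     (forall n k, ds h x n k <> 0) ->
     forall n k, conservation_lhs tau h alpha x n k =
       (dt tau x n k + chk (dt tau x) n k) / 2
       * scheme_lhs tau h alpha x (fun _ _ => 0) n k).
Proof.
  split.
  - intros x Hd HS n k. rewrite (ident tau h alpha Htau Hh x Hd), HS. ring.
  - exact (ident tau h alpha Htau Hh).
Qed.
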